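(* Let $\mathcal{X}$ be a connected $n$-premaniplex with base flag $x_0$ and $N=\operatorname{Stab}_{\mathcal{C}^n}(x_0)$, and let $(\mathcal{Y},\eta)$ be an $(n,m)$-voltage operator that preserves connectivity, with base flag $y_0$ of $\mathcal{Y}$, $L=\operatorname{Stab}_{\mathcal{C}^m}(y_0)$ and $\zeta:L\to\mathcal{C}^n$, $\zeta(\omega)=\eta(W_\omega(y_0))$. For $\upsilon\in\mathcal{C}^m$ let $\mathcal{Z}_\upsilon=\mathcal{C}^n/\zeta(L\cap L^\upsilon)$. If for every $\upsilon\in\mathcal{C}^m\setminus L$ the premaniplex $\mathcal{X}$ does not cover $\mathcal{Z}_\upsilon$, then every automorphism $\gamma$ of $\mathcal{X}\rtimes_\eta\mathcal{Y}$ is induced by an automorphism of $\mathcal{X}$, i.e. there is $\alpha\in\operatorname{Aut}(\mathcal{X})$ with $(x,y)\gamma=(x\alpha,y)$ for all $(x,y)$.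
   Context: An $n$-premaniplex is an edge-coloured graph (semi-edges and parallel edges allowed) with colours $\{0,\dots,n-1\}$ such that every vertex (flag) is the start of exactly one dart of each colour, and for $|i-j|\ge2$ alternating $i,j$-paths of length 4 are closed; $x^i$ is the $i$-adjacent flag of $x$. $\mathcal{C}^n=\langle r_0,\dots,r_{n-1}\mid r_i^2,\ (r_ir_j)^2\ (|i-j|\ge2)\rangle$ acts on the left on flags by $r_ix=x^i$; automorphisms act on the right. A covering is a surjective map of flags preserving all adjacencies. $L^\upsilon=\upsilon^{-1}L\upsilon$. For a subgroup $K\le\mathcal{C}^n$, $\mathcal{C}^n/K$ has flags the left cosets $\omega K$ with $(\omega K)^i=r_i\omega K$. For a flag $y$ of an $m$-premaniplex $\mathcal{Y}$ and $\omega\in\mathcal{C}^m$, $W_\omega(y)$ is the homotopy class of paths from $y$ whose colour sequence $i_1,\dots,i_k$ satisfies $r_{i_k}\cdots r_{i_1}=\omega$; these form the fundamental groupoid $\Pi(\mathcal{Y})$. A voltage assignment $\eta:\Pi(\mathcal{Y})\to\mathcal{C}^n$ satisfies $\eta(W_1W_2)=\eta(W_2)\eta(W_1)$; $(\mathcal{Y},\eta)$ is an $(n,m)$-voltage operator. $\mathcal{X}\rtimes_\eta\mathcal{Y}$ has flags $\mathcal{X}\times\mathcal{Y}$ and $(x,y)^i=(\eta(W_{r_i}(y))x,r_iy)$, $i\in\{0,\dots,m-1\}$. The operator preserves connectivity if $\mathcal{X}\rtimes_\eta\mathcal{Y}$ is connected whenever $\mathcal{X}$ is. Standing convention: $\mathcal{Y}$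 has a spanning tree all of whose darts have trivial voltage. *)

(* Defs.v *)
From mathcomp Require Import all_boot.
Set Implicit Arguments. Unset Strict Implicit. Unset Printing Implicit Defensive.

(* The group C^n = < r_0..r_{n-1} | r_i^2, (r_i r_j)^2 (|i-j|>=2) >,       *)
(* represented by words (seq 'I_n) modulo the congruence [ceq] generated   *)
(* by the defining relations.  The word [:: a1; ...; ak] stands for the    *)
(* product r_a1 r_a2 ... r_ak; group product = concatenation, inverse of   *)
(* a word = its reversal (generators are involutions).                     *)
Definition far (n : nat) (i j : 'I_n) : bool := (i.+1 < j) || (j.+1 < i).

Inductive ceq (n : nat) : seq 'I_n -> seq 'I_n -> Prop :=
| ceq_refl w : ceq w w
| ceq_sym w w' : ceq w w' -> ceq w' w
| ceq_trans w1 w2 w3 : ceq w1 w2 -> ceq w2 w3 -> ceq w1 w3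
| ceq_cat a a' b b' : ceq a a' -> ceq b b' -> ceq (a ++ b) (a' ++ b')
| ceq_sq i : ceq [:: i; i] [::]
| ceq_comm i j : far i j -> ceq [:: i; j; i; j] [::].

(* n-premaniplexes: x^i = adj i x; each flag has exactly one i-dart, so    *)
(* adj i is an involution (fixed points = semi-edges).                     *)
Record premaniplex (n : nat) := Premaniplex {
  flag :> Type;
  adj : 'I_n -> flag -> flag;
  adjK : forall i x, adj i (adj i x) = x;
  adj_far : forall i j x, far i j -> adj i (adj j (adj i (adj j x))) = x
}.
Arguments adj {n} X i x : rename.

(* left action of a word: the word [:: a1;..;ak] = r_a1...r_ak acts on x  *)
(* as r_a1 (r_a2 (... (r_ak x))).                                          *)
Definition gact (T : Type) (k : nat) (adjT : 'I_k -> T -> T)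
  (w : seq 'I_k) (t : T) : T := foldr adjT t w.

Definition act (n : nat) (X : premaniplex n) (w : seq 'I_n) (x : X) : X :=
  gact (adj X) w x.
Arguments act {n} X w x.

Definition connected (T : Type) (k : nat) (adjT : 'I_k -> T -> T) : Prop :=
  forall x y : T, exists w : seq 'I_k, gact adjT w x = y.

(* automorphism (acting on the right; written here as a function) *)
Definition is_auto (T : Type) (k : nat) (adjT : 'I_k -> T -> T)
  (g : T -> T) : Prop :=
  bijective g /\ forall i t, g (adjT i t) = adjT i (g t).

(* Voltage assignments.  The homotopy class W_w(y) (paths from y whose     *)
(* colour sequence i_1..i_k satisfies r_ik...r_i1 = w) is identified with  *)
(* the pair (y, w), w in C^m; it ends at w y.  Composition:                *)
(* W_w(y) W_w'(w y) = W_(w' w)(y).  A voltage assignment is                *)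
(* eta : (y, w) |-> eta y w in C^n, well defined on classes, with          *)
(* eta(W1 W2) = eta(W2) eta(W1).                                           *)
Definition voltage (m n : nat) (Y : premaniplex m)
  (eta : Y -> seq 'I_m -> seq 'I_n) : Prop :=
  (forall y w w', ceq w w' -> ceq (eta y w) (eta y w')) /\
  (forall y w w', ceq (eta y (w' ++ w)) (eta (act Y w y) w' ++ eta y w)).

(* standing convention: Y has a spanning tree whose darts all have trivial *)
(* voltage.  A spanning tree is given by a root r, a parent colour p y and *)
(* a depth d y (d r = 0, the parent adj (p y) y of y <> r has depth d y - 1);*)
(* its edges are {y, adj (p y) y}, y <> r, and its darts are the two        *)
(* darts W_{r_(p y)}(y) and W_{r_(p y)}(adj (p y) y) of each such edge.    *)
Definition spanning_tree_trivial (m n : nat) (Y : premaniplex m)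
  (eta : Y -> seq 'I_m -> seq 'I_n) : Prop :=
  exists (r : Y) (p : Y -> 'I_m) (d : Y -> nat),
    d r = 0 /\
    (forall y, y <> r -> (d (adj Y (p y) y)).+1 = d y) /\
    (forall y, y <> r ->
       ceq (eta y [:: p y]) [::] /\ ceq (eta (adj Y (p y) y) [:: p y]) [::]).

Definition prod_adj (n m : nat) (X : premaniplex n) (Y : premaniplex m)
  (eta : Y -> seq 'I_m -> seq 'I_n) (i : 'I_m) (p : X * Y) : X * Y :=
  (act X (eta p.2 [:: i]) p.1, adj Y i p.2).
Arguments prod_adj {n m} X {Y} eta i p.

Definition preserves_connectivity (m n : nat) (Y : premaniplex m)
  (eta : Y -> seq 'I_m -> seq 'I_n) : Prop :=
  forall X : premaniplex n, connected (adj X) -> connected (prod_adj X eta).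

(* Quotients C^n / K for a subgroup K (given as a predicate on words,      *)
(* closed under ceq).  Left cosets: wK = w'K iff w^-1 w' in K.  A map      *)
(* X -> C^n/K is given by a choice of representatives f : X -> words.      *)
(* X covers C^n/K iff there is a surjective adjacency-preserving map,      *)
(* where (wK)^i = r_i w K.                                                 *)
Definition coset_eq (n : nat) (K : seq 'I_n -> Prop) (w w' : seq 'I_n) : Prop :=
  K (rev w ++ w').

Definition covers_quotient (n : nat) (X : premaniplex n)
  (K : seq 'I_n -> Prop) : Prop :=
  exists f : X -> seq 'I_n,
    (forall x i, coset_eq K (f (adj X i x)) (i :: f x)) /\
    (forall w, exists x, coset_eq K (f x) w).

Definition stab (m : nat) (Y : premaniplex m) (y0 : Y) (w : seq 'I_m) : Prop :=
  act Y w y0 = y0.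

(* zeta(L ∩ L^u), where L^u = u^-1 L u, i.e. w ∈ L^u iff u w u^-1 ∈ L,     *)
(* and zeta(w) = eta(W_w(y0)).                                             *)
Definition zeta_sub (m n : nat) (Y : premaniplex m)
  (eta : Y -> seq 'I_m -> seq 'I_n) (y0 : Y) (u : seq 'I_m)
  (v : seq 'I_n) : Prop :=
  exists w, stab y0 w /\ stab y0 (u ++ w ++ rev u) /\ ceq (eta y0 w) v.

(* Main.v *)
Require Import Defs.
From mathcomp Require Import all_boot.
From Stdlib Require Import Classical ClassicalEpsilon FunctionalExtensionality PropExtensionality ProofIrrelevance.

Section Basics.
Variable n : nat.

Lemma ceq_consl (i : 'I_n) {a b} : ceq a b -> ceq (i :: a) (i :: b).
Proof. move=> H; exact: (ceq_cat (ceq_refl [:: i]) H). Qed.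

Lemma ceq_ii (i : 'I_n) v : ceq (i :: i :: v) v.
Proof. have := ceq_cat (ceq_sq i) (ceq_refl v). by []. Qed.

Lemma ceq_far {i j : 'I_n} v : far i j -> ceq (i :: j :: i :: j :: v) v.
Proof. move=> f; have := ceq_cat (ceq_comm f) (ceq_refl v). by []. Qed.

Lemma ceq_revl (u : seq 'I_n) : ceq (rev u ++ u) [::].
Proof.
elim: u => [|a u IH] /=; first exact: ceq_refl.
rewrite rev_cons -cats1 -catA /=.
apply: ceq_trans _ IH.
apply: ceq_cat; first exact: ceq_refl.
exact: ceq_ii.
Qed.

Lemma ceq_revr (u : seq 'I_n) : ceq (u ++ rev u) [::].
Proof. by have := ceq_revl (rev u); rewrite revK. Qed.

Lemma act_cat (X : premaniplex n) u v x : act X (u ++ v) x = act X u (act X v x).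
Proof. by rewrite /act /gact foldr_cat. Qed.

Lemma act_ceq (X : premaniplex n) u v x : ceq u v -> act X u x = act X v x.
Proof.
move=> H; elim: H x => {u v}.
- by [].
- by move=> w w' _ IH x; rewrite IH.
- by move=> w1 w2 w3 _ IH1 _ IH2 x; rewrite IH1 IH2.
- by move=> a a' b b' _ IH1 _ IH2 x; rewrite !act_cat IH1 IH2.
- by move=> i x; rewrite /act /= adjK.
- by move=> i j f x; rewrite /act /= adj_far.
Qed.

Lemma act_revK (X : premaniplex n) u x : act X (rev u) (act X u x) = x.
Proof. by rewrite -act_cat (@act_ceq X _ _ x (ceq_revl u)). Qed.

Lemma act_Krev (X : premaniplex n) u x : act X u (act X (rev u) x) = x.
Proof. by rewrite -act_cat (@act_ceq X _ _ x (ceq_revr u)). Qed.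

Lemma gact_auto T (adjT : 'I_n -> T -> T) g w t :
  (forall i t, g (adjT i t) = adjT i (g t)) -> g (gact adjT w t) = gact adjT w (g t).
Proof. move=> H; elim: w => [|a w IH] //=; by rewrite H IH. Qed.

Definition Uflag := {P : seq 'I_n -> Prop | exists w, P = ceq w}.

Lemma Ueq (P Q : Uflag) : sval P = sval Q -> P = Q.
Proof.
case: P => P hP; case: Q => Q hQ /= E; subst Q; f_equal; apply: proof_irrelevance.
Qed.

Lemma Uadj_ok (i : 'I_n) (P : Uflag) : exists w, (fun v => sval P (i :: v)) = ceq w.
Proof.
have [w e] := svalP P; rewrite e; exists (i :: w).
apply: functional_extensionality => v; apply: propositional_extensionality; rewrite /=; split=> H.
- apply: ceq_trans (ceq_consl i H) _; exact: ceq_ii.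
- apply: ceq_trans (ceq_sym (ceq_ii i w)) _; exact: ceq_consl.
Qed.

Definition Uadj (i : 'I_n) (P : Uflag) : Uflag := exist _ _ (Uadj_ok i P).

Lemma UadjK i P : Uadj i (Uadj i P) = P.
Proof.
apply: Ueq; have [w e] := svalP P; rewrite /= e.
apply: functional_extensionality => v; apply: propositional_extensionality; rewrite /=; split=> H.
- exact: ceq_trans H (ceq_ii i v).
- exact: ceq_trans H (ceq_sym (ceq_ii i v)).
Qed.

Lemma Uadj_far i j P : far i j -> Uadj i (Uadj j (Uadj i (Uadj j P))) = P.
Proof.
move=> f0; have f : far j i by move: f0; rewrite /far orbC.
apply: Ueq; have [w e] := svalP P; rewrite /= e.
apply: functional_extensionality => v; apply: propositional_extensionality; rewrite /=; split=> H.
- exact: ceq_trans H (ceq_far v f).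
- exact: ceq_trans H (ceq_sym (ceq_far v f)).
Qed.

Definition U : premaniplex n := @Premaniplex n Uflag Uadj UadjK Uadj_far.

Lemma Uact u (P : U) : sval (act U u P) = fun t => sval P (rev u ++ t).
Proof.
elim: u => [|a u IH] //=.
rewrite /act /= -/(act U u P) IH rev_cons -cats1.
by apply: functional_extensionality => t; rewrite -catA.
Qed.

Lemma Uelt w : exists P : U, sval P = ceq w.
Proof. by exists (exist _ (ceq w) (ex_intro _ w erefl)). Qed.

Lemma ceq_cancel (a s t : seq 'I_n) : ceq (a ++ s) (a ++ t) <-> ceq s t.
Proof.
split=> H; last exact: ceq_cat (ceq_refl a) H.
have K u : ceq (rev a ++ a ++ u) u.
  by rewrite catA; have := ceq_cat (ceq_revl a) (ceq_refl u).
apply: ceq_trans (ceq_sym (K s)) _; apply: ceq_trans _ (K t).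
exact: ceq_cat (ceq_refl _) H.
Qed.

Lemma U_connected : connected (adj U).
Proof.
move=> P Q; have [w eP] := svalP P; have [w' eQ] := svalP Q.
exists (w' ++ rev w); apply: Ueq; rewrite (Uact (w' ++ rev w)) /= eP eQ.
apply: functional_extensionality => v; apply: propositional_extensionality.
rewrite rev_cat revK -catA.
have E1 : ceq w (w ++ rev w' ++ v) <-> ceq [::] (rev w' ++ v).
  by have := ceq_cancel w [::] (rev w' ++ v); rewrite cats0.
have E2 := ceq_cancel (rev w') w' v.
have E3 : ceq [::] (rev w' ++ v) <-> ceq (rev w' ++ w') (rev w' ++ v).
  split=> H; [exact: ceq_trans (ceq_revl w') H | exact: ceq_trans (ceq_sym (ceq_revl w')) H].
tauto.
Qed.
End Basics.

Lemma eta_nil (n m : nat) (Y : premaniplex m) (eta : Y -> seq 'I_m -> seq 'I_n) y :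
  voltage eta -> ceq (eta y [::]) [::].
Proof.
case=> _ V2; have h := V2 y [::] [::].
have h2 : ceq (eta y [::] ++ [::]) (eta y [::] ++ eta y [::]) by rewrite cats0.
exact: ceq_sym (proj1 (ceq_cancel _ _ _ _) h2).
Qed.

Lemma actP (n m : nat) (X : premaniplex n) (Y : premaniplex m)
  (eta : Y -> seq 'I_m -> seq 'I_n) (V : voltage eta) w x y :
  gact (prod_adj X eta) w (x, y) = (act X (eta y w) x, act Y w y).
Proof.
elim: w => [|a w IH] /=.
  by rewrite (act_ceq _ _ _ _ _ (@eta_nil _ _ _ eta y V)).
rewrite IH /prod_adj /=; congr pair.
rewrite -act_cat; apply: act_ceq; apply: ceq_sym; exact: (V.2 y w [:: a]).
Qed.

Lemma zeta_surj (n m : nat) (Y : premaniplex m)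
  (eta : Y -> seq 'I_m -> seq 'I_n) (y0 : Y) :
  preserves_connectivity eta -> voltage eta ->
  forall w, exists v, stab y0 v /\ ceq (eta y0 v) w.
Proof.
move=> PC V w.
have C := PC (U n) (U_connected n).
have [e0 He0] := Uelt n [::]; have [P HP] := Uelt n w.
have [v Hv] := C (e0, y0) (P, y0).
rewrite actP // in Hv; case: Hv => H1 H2.
exists v; split => //.
have := @Uact n (eta y0 v) e0; rewrite H1 HP He0 => E.
have := equal_f E w => /= E'.
have hw : ceq [::] (rev (eta y0 v) ++ w) by rewrite -E'; exact: ceq_refl.
apply: (proj1 (ceq_cancel _ (rev (eta y0 v)) _ _)).
exact: ceq_trans (ceq_revl _ _) hw.
Qed.

Theorem theorem5p7 (n m : nat) (X : premaniplex n) (x0 : X)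
  (Y : premaniplex m) (eta : Y -> seq 'I_m -> seq 'I_n) (y0 : Y) :
  connected (adj X) ->
  voltage eta ->
  spanning_tree_trivial eta ->
  preserves_connectivity eta ->
  (forall u : seq 'I_m, ~ stab y0 u -> ~ covers_quotient X (zeta_sub eta y0 u)) ->
  forall g : X * Y -> X * Y, is_auto (prod_adj X eta) g ->
  exists a : X -> X, is_auto (adj X) a /\ forall x y, g (x, y) = (a x, y).
Proof.
move=> CX V _ PC H g [gb gc].
have CP := PC X CX.
have gP w p : g (gact (prod_adj X eta) w p) = gact (prod_adj X eta) w (g p).
  exact: gact_auto.
have surj := @zeta_surj _ _ _ eta y0 PC V.
case E: (g (x0, y0)) => [x1 y1].
have [v Hv] := CP (x0, y0) (x1, y1).
rewrite actP // in Hv; case: Hv => Hx1 Hy1.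
have y1E : y1 = y0.
  apply: NNPP => ne; apply: (H (rev v)).
    move=> st; apply: ne; rewrite -Hy1 -{1}st; exact: act_Krev.
  have Kl nn : act X nn x0 = x0 -> zeta_sub eta y0 (rev v) nn.
    move=> hn; have [om [so ce]] := surj nn.
    exists om; split => //; split; last done.
    have fx : gact (prod_adj X eta) om (x0, y0) = (x0, y0).
      by rewrite actP // so (act_ceq _ _ _ _ _ ce) hn.
    have := gP om (x0, y0); rewrite fx E actP // => -[_ h].
    by rewrite /stab revK !act_cat Hy1 -h -Hy1 act_revK.
  pose fc x : {w | act X w x0 = x} := constructive_indefinite_description _ (CX x0 x).
  exists (fun x => sval (fc x)); split.
    move=> x i; apply: Kl; rewrite /coset_eq act_cat.
    have ha := svalP (fc (adj X i x)); have hb := svalP (fc x).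
    change (act X (rev (sval (fc (adj X i x)))) (adj X i (act X (sval (fc x)) x0)) = x0).
    move: (sval (fc (adj X i x))) ha => sa ha.
    by rewrite hb -{1}ha act_revK.
  move=> w; exists (act X w x0); apply: Kl; rewrite /coset_eq act_cat.
  have hb := svalP (fc (act X w x0)).
  set b := sval _ in hb *.
  by rewrite -hb act_revK.
pose a x := (g (x, y0)).1.
have G0 x : g (x, y0) = (a x, y0).
  have [w Hw] := CP (x0, y0) (x, y0).
  have := gP w (x0, y0); rewrite Hw E y1E actP // => e.
  rewrite actP // in Hw; case: Hw => _ hy.
  by rewrite /a e hy.
have A1 x om : stab y0 om -> a (act X (eta y0 om) x) = act X (eta y0 om) (a x).
  move=> so; have := gP om (x, y0); rewrite actP // so !G0 actP //.
  by case.
have A2 x i : a (adj X i x) = adj X i (a x).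
  have [om [so ce]] := surj [:: i].
  by have := A1 x om so; rewrite !(act_ceq _ _ _ _ _ ce).
have A3 w x : a (act X w x) = act X w (a x).
  elim: w => [|c w IH] //=.
  by rewrite /act /= -!/(act X _ _) A2 IH.
have G x y : g (x, y) = (a x, y).
  have [w Hw] := CP (x0, y0) (x, y).
  have := gP w (x0, y0); rewrite Hw G0 actP // => ->.
  rewrite actP // in Hw; case: Hw => hx hy.
  by rewrite -A3 hx hy.
exists a; split; last exact: G.
split; last by move=> i t; exact: A2.
case: gb => gi gK giK.
exists (fun x => (gi (x, y0)).1).
  by move=> x; rewrite -G0 gK.
move=> x; case E': (gi (x, y0)) => [x' y'] /=.
by have := giK (x, y0); rewrite E' G => -[].
Qed.
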